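(* Let $\Sigma$ be a signature containing a binary relation symbol $\equiv$. Then $\mathsf{FSATEQ}(\Sigma;\equiv)\preceq\mathsf{FSAT}(\Sigma)$.
   Context: We work in constructive type theory. $p\preceq q$ means there is a function $f$ with $p\,x\leftrightarrow q(f\,x)$ for all $x$. A type is finite if some list contains all of its elements. A signature consists of a type of function symbols and a type of relation symbols, each with an arity. Formulas are first-order formulas built from $\dot\bot$, atoms, $\dot\to,\dot\land,\dot\lor,\dot\forall,\dot\exists$. A model over a domain $D$ interprets function symbols as functions $D^{|f|}\to D$ and relation symbols as predicates $D^{|P|}\to\mathbb P$, with Tarski satisfaction $\mathcal M\vDash_\rho\varphi$. The model is decidable if every relation interpretation is decidable. $\mathsf{FSAT}(\Sigma)\,\varphi$ holds iff some finite type $D$, decidable model over $D$ and assignment $\rho$ satisfy $\varphi$. $\mathsf{FSATEQ}(\Sigma;\equiv)\,\varphi$ holds iff this is possible with the model additionally satisfying $\equiv^{\mathcal M}x\,y\leftrightarrow x=y$ for all $x,y:D$. *)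

(* Defs.v *)
(* first-order logic over an arbitrary signature,
   following Kirst & Larchey-Wendling, "Trakhtenbrot's theorem in Coq". *)
From Stdlib Require Import List Vector.
Import ListNotations.

Set Implicit Arguments.

Definition reduces {X Y : Type} (p : X -> Prop) (q : Y -> Prop) : Prop :=
  exists f : X -> Y, forall x, p x <-> q (f x).

Definition finite (D : Type) : Prop := exists l : list D, forall x : D, List.In x l.

Record signature : Type := Signature {
  syms : Type;
  ar_syms : syms -> nat;
  rels : Type;
  ar_rels : rels -> nat }.

Section Syntax.
Variable Σ : signature.

(* Terms with de Bruijn variables *)
Inductive term : Type :=
  | var : nat -> term
  | func : forall f : syms Σ, Vector.t term (ar_syms Σ f) -> term.

Inductive form : Type :=
  | fal : form
  | atom : forall P : rels Σ, Vector.t term (ar_rels Σ P) -> form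
  | imp : form -> form -> form
  | conj : form -> form -> form
  | disj : form -> form -> form
  | all : form -> form
  | ex : form -> form.

Record model (D : Type) : Type := Model {
  fun_i : forall f : syms Σ, Vector.t D (ar_syms Σ f) -> D;
  rel_i : forall P : rels Σ, Vector.t D (ar_rels Σ P) -> Prop }.

Definition scons {D : Type} (d : D) (rho : nat -> D) : nat -> D :=
  fun n => match n with 0 => d | S n => rho n end.

Fixpoint eval {D : Type} (M : model D) (rho : nat -> D) (t : term) : D :=
  match t with
  | var n => rho n
  | func f v => fun_i M f (Vector.map (eval M rho) v)
  end.

Fixpoint sat {D : Type} (M : model D) (rho : nat -> D) (phi : form) : Prop :=
  match phi with
  | fal => False
  | atom P v => rel_i M P (Vector.map (eval M rho) v)
  | imp a b => sat M rho a -> sat M rho b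
  | conj a b => sat M rho a /\ sat M rho b
  | disj a b => sat M rho a \/ sat M rho b
  | all a => forall d : D, sat M (scons d rho) a
  | ex a => exists d : D, sat M (scons d rho) a
  end.

Definition model_dec {D : Type} (M : model D) : Type :=
  forall (P : rels Σ) (v : Vector.t D (ar_rels Σ P)), {rel_i M P v} + {~ rel_i M P v}.

Definition FSAT (phi : form) : Prop :=
  exists (D : Type) (M : model D) (rho : nat -> D),
    finite D /\ inhabited (model_dec M) /\ sat M rho phi.

Definition pair_vec {D : Type} (e : rels Σ) (He : ar_rels Σ e = 2) (x y : D)
  : Vector.t D (ar_rels Σ e) :=
  eq_rect 2 (Vector.t D) (Vector.cons D x 1 (Vector.cons D y 0 (Vector.nil D)))
          (ar_rels Σ e) (eq_sym He).

Definition FSATEQ (e : rels Σ) (He : ar_rels Σ e = 2) (phi : form) : Prop :=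
  exists (D : Type) (M : model D) (rho : nat -> D),
    finite D /\ inhabited (model_dec M) /\
    (forall x y : D, rel_i M e (pair_vec e He x y) <-> x = y) /\
    sat M rho phi.

End Syntax.

(* Main.v *)
Require Import Defs.
From Stdlib Require Import List Vector Lia Arith FunctionalExtensionality ProofIrrelevance Classical.
Import ListNotations.
Set Implicit Arguments.

Definition top (Σ : signature) : form Σ := imp (fal Σ) (fal Σ).

Fixpoint vnth {Σ} {n} (v : Vector.t (term Σ) n) (i : nat) : term Σ :=
  match v with
  | Vector.nil _ => var Σ 0
  | Vector.cons _ t _ v' => match i with 0 => t | S i' => vnth v' i' end
  end.

Fixpoint tind Σ (P : term Σ -> Prop) (Hv : forall n, P (var Σ n))
  (Hf : forall f v, (forall i, P (@vnth Σ _ v i)) -> P (func f v)) (t : term Σ) : P t :=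
  match t with
  | var _ n => Hv n
  | func f v => Hf f v
     ((fix aux n (v : Vector.t (term Σ) n) : forall i, P (vnth v i) :=
        match v in Vector.t _ n return forall i, P (vnth v i) with
        | Vector.nil _ => fun i => Hv 0
        | Vector.cons _ t m v' => fun i => match i with 0 => tind P Hv Hf t | S i' => aux m v' i' end
        end) _ v)
  end.

Fixpoint symt {Σ} (t : term Σ) : list (syms Σ) :=
  match t with
  | var _ _ => []
  | func f v => f :: (fix sv n (v : Vector.t (term Σ) n) : list (syms Σ) :=
       match v with Vector.nil _ => [] | Vector.cons _ t _ v' => symt t ++ sv _ v' end) _ v
  end.

Fixpoint symv {Σ} {n} (v : Vector.t (term Σ) n) : list (syms Σ) :=
  match v with Vector.nil _ => [] | Vector.cons _ t _ v' => symt t ++ symv v' end.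

Lemma symt_func Σ f (v : Vector.t (term Σ) _) : symt (func f v) = f :: symv v.
Proof. simpl. f_equal. induction v; simpl; congruence. Qed.

Lemma symv_nth Σ n (v : Vector.t (term Σ) n) i : incl (symt (vnth v i)) (symv v).
Proof.
  revert i; induction v; intros i; simpl.
  - intros x [].
  - destruct i; [apply incl_appl, incl_refl | apply incl_appr, IHv].
Qed.

Fixpoint symf {Σ} (phi : form Σ) : list (syms Σ) :=
  match phi with
  | fal _ => []
  | atom P v => symv v
  | imp a b | conj a b | disj a b => symf a ++ symf b
  | all a | ex a => symf a
  end.

Fixpoint relf {Σ} (phi : form Σ) : list (rels Σ) :=
  match phi with
  | fal _ => []
  | atom P v => [P]
  | imp a b | conj a b | disj a b => relf a ++ relf b
  | all a | ex a => relf a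
  end.

Fixpoint alls {Σ} n (A : form Σ) : form Σ :=
  match n with 0 => A | S n => all (alls n A) end.

Fixpoint vars Σ k n : Vector.t (term Σ) n :=
  match n with 0 => Vector.nil _ | S n => Vector.cons _ (var Σ k) _ (vars Σ (S k) n) end.

Fixpoint tab {D} k n (s : nat -> D) : Vector.t D n :=
  match n with 0 => Vector.nil _ | S n => Vector.cons _ (s k) _ (tab (S k) n s) end.

Lemma tab_ext2 D n : forall k k' (s t : nat -> D), (forall i, i < n -> s (k+i) = t (k'+i)) ->
  tab k n s = tab k' n t.
Proof.
  induction n; intros k k' s t H; simpl; [reflexivity|].
  f_equal.
  - specialize (H 0); rewrite !Nat.add_0_r in H; apply H; lia.
  - apply IHn; intros i Hi. specialize (H (S i)). rewrite <- !plus_n_Sm in H. apply H; lia.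
Qed.

Lemma map_vars Σ D (M : model Σ D) rho n : forall k,
  Vector.map (eval M rho) (vars Σ k n) = tab k n rho.
Proof. induction n; intros k; simpl; [reflexivity| f_equal; apply IHn]. Qed.

Lemma map_tab Σ (D : Type) (g : term Σ -> D) n (v : Vector.t (term Σ) n) : forall k,
  Vector.map g v = tab k n (fun i => g (vnth v (i - k))).
Proof.
  induction v; intros k; simpl; [reflexivity|].
  rewrite Nat.sub_diag. f_equal. rewrite (IHv (S k)). apply tab_ext2.
  intros i Hi. replace (S k + i - k) with (S i) by lia. replace (S k + i - S k) with i by lia. reflexivity.
Qed.

Lemma map_tab0 Σ (D : Type) (g : term Σ -> D) n (v : Vector.t (term Σ) n) :
  Vector.map g v = tab 0 n (fun i => g (vnth v i)).
Proof. rewrite (map_tab g v 0). apply tab_ext2. intros i _. simpl. rewrite Nat.sub_0_r. reflexivity. Qed.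

Lemma map_pair_vec Σ (e : rels Σ) He (D D' : Type) (g : D -> D') x y :
  Vector.map g (pair_vec Σ e He x y) = pair_vec Σ e He (g x) (g y).
Proof. unfold pair_vec. generalize (ar_rels Σ e) He. intros n H. subst n. reflexivity. Qed.

Lemma sat_alls Σ D (M : model Σ D) n : forall rho A,
  sat M rho (alls n A) <-> forall s : nat -> D, sat M (fun i => if i <? n then s i else rho (i - n)) A.
Proof.
  induction n; intros rho A; simpl.
  - split; intros H.
    + intros s. replace (fun i => rho (i - 0)) with rho; [exact H|]. extensionality i. rewrite Nat.sub_0_r; reflexivity.
    + specialize (H rho). replace (fun i => rho (i - 0)) with rho in H; [exact H|]. extensionality i. rewrite Nat.sub_0_r; reflexivity.
  - split; intros H.
    + intros s. specialize (H (s n)). apply IHn with (s := s) in H.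
      match goal with H : sat M ?r1 A |- sat M ?r2 A => replace r2 with r1; [exact H|] end.
      extensionality i. destruct (Nat.ltb_spec i n); destruct (Nat.ltb_spec i (S n)); try lia; try reflexivity.
      * replace i with n by lia. rewrite Nat.sub_diag. reflexivity.
      * destruct (i - n) eqn:E; [lia|]. simpl. f_equal. lia.
    + intros d. apply IHn. intros s.
      specialize (H (fun i => if i <? n then s i else d)).
      match goal with H : sat M ?r1 A |- sat M ?r2 A => replace r2 with r1; [exact H|] end.
      extensionality i. destruct (Nat.ltb_spec i n); destruct (Nat.ltb_spec i (S n)); try lia; try reflexivity.
      * replace i with n by lia. rewrite Nat.sub_diag; try rewrite Nat.ltb_irrefl; reflexivity.
      * destruct (i - n) eqn:E; [lia|]. simpl. f_equal. lia.
Qed.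

Definition Req Σ e He (t1 t2 : term Σ) : form Σ := atom e (pair_vec Σ e He t1 t2).
Arguments Req {Σ}.

Fixpoint eqf Σ e He n k : form Σ :=
  match k with 0 => top Σ | S k => conj (Req e He (var Σ k) (var Σ (n + k))) (eqf Σ e He n k) end.
Arguments eqf {Σ}.

Definition AxF Σ e He (f : syms Σ) : form Σ :=
  alls (ar_syms Σ f + ar_syms Σ f) (imp (eqf e He (ar_syms Σ f) (ar_syms Σ f))
    (Req e He (func f (vars Σ 0 (ar_syms Σ f))) (func f (vars Σ (ar_syms Σ f) (ar_syms Σ f))))).
Arguments AxF {Σ}.

Definition AxR Σ e He (P : rels Σ) : form Σ :=
  alls (ar_rels Σ P + ar_rels Σ P) (imp (eqf e He (ar_rels Σ P) (ar_rels Σ P))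
    (imp (atom P (vars Σ 0 (ar_rels Σ P))) (atom P (vars Σ (ar_rels Σ P) (ar_rels Σ P))))).
Arguments AxR {Σ}.

Definition bigconj Σ (l : list (form Σ)) : form Σ := List.fold_right (@conj Σ) (top Σ) l.

Definition Ax_refl Σ e He : form Σ := all (Req e He (var Σ 0) (var Σ 0)).
Arguments Ax_refl {Σ}.
Definition Ax_sym Σ e He : form Σ := all (all (imp (Req e He (var Σ 1) (var Σ 0)) (Req e He (var Σ 0) (var Σ 1)))).
Arguments Ax_sym {Σ}.
Definition Ax_trans Σ e He : form Σ := all (all (all (imp (Req e He (var Σ 2) (var Σ 1))
   (imp (Req e He (var Σ 1) (var Σ 0)) (Req e He (var Σ 2) (var Σ 0)))))).
Arguments Ax_trans {Σ}.

Definition red Σ e He (phi : form Σ) : form Σ :=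
  conj phi (conj (Ax_refl e He) (conj (Ax_sym e He) (conj (Ax_trans e He)
    (conj (bigconj (List.map (AxF e He) (symf phi))) (bigconj (List.map (AxR e He) (relf phi))))))).
Arguments red {Σ}.

Definition Rel Σ e He D (M : model Σ D) x y := rel_i M e (pair_vec Σ e He x y).
Arguments Rel {Σ} e He {D}.

Lemma sat_Req Σ e He D (M : model Σ D) rho t1 t2 :
  sat M rho (Req e He t1 t2) <-> Rel e He M (eval M rho t1) (eval M rho t2).
Proof. unfold Req, Rel; simpl. rewrite map_pair_vec. reflexivity. Qed.

Lemma sat_eqf Σ e He D (M : model Σ D) rho n k :
  sat M rho (eqf e He n k) <-> forall i, i < k -> Rel e He M (rho i) (rho (n + i)).
Proof.
  induction k.
  - simpl. split; [intros; lia| intros _ []].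
  - transitivity (sat M rho (Req e He (var Σ k) (var Σ (n+k))) /\ sat M rho (eqf e He n k)); [reflexivity|].
    rewrite sat_Req, IHk. simpl. split.
    + intros [H1 H2] i Hi. destruct (Nat.eq_dec i k); [subst; exact H1| apply H2; lia].
    + intros H; split; [apply H; lia| intros i Hi; apply H; lia].
Qed.

Lemma sat_bigconj Σ D (M : model Σ D) rho l :
  sat M rho (bigconj l) <-> forall a, List.In a l -> sat M rho a.
Proof.
  induction l; simpl.
  - split; [intros _ _ []| intros _ x; exact x].
  - rewrite IHl. split; [intros [H1 H2] b [<-|Hb]; auto| intros H; split; auto].
Qed.

Lemma forall_iff {A : Type} (P Q : A -> Prop) : (forall a, P a <-> Q a) -> ((forall a, P a) <-> (forall a, Q a)).
Proof. intros H; split; intros H' a; apply H, H'. Qed.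

Definition CongF Σ e He D (M : model Σ D) f :=
  forall s : nat -> D, (forall i, i < ar_syms Σ f -> Rel e He M (s i) (s (ar_syms Σ f + i))) ->
    Rel e He M (fun_i M f (tab 0 _ s)) (fun_i M f (tab (ar_syms Σ f) _ s)).
Arguments CongF {Σ} e He {D}.

Definition CongR Σ e He D (M : model Σ D) P :=
  forall s : nat -> D, (forall i, i < ar_rels Σ P -> Rel e He M (s i) (s (ar_rels Σ P + i))) ->
    rel_i M P (tab 0 _ s) -> rel_i M P (tab (ar_rels Σ P) _ s).
Arguments CongR {Σ} e He {D}.

Lemma sat_AxF Σ e He D (M : model Σ D) rho f :
  sat M rho (AxF e He f) <-> CongF e He M f.
Proof.
  unfold AxF, CongF. rewrite sat_alls. apply forall_iff; intros s.
  cbn [sat]. rewrite sat_eqf, sat_Req. cbn [eval]. rewrite !map_vars.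
  set (n := ar_syms Σ f).
  set (env := fun i => if i <? n + n then s i else rho (i - (n + n))).
  assert (E1 : tab 0 n env = tab 0 n s) by (apply tab_ext2; intros i Hi; unfold env; simpl;
     destruct (Nat.ltb_spec i (n+n)); [reflexivity|lia]).
  assert (E2 : tab n n env = tab n n s) by (apply tab_ext2; intros i Hi; unfold env; simpl;
     destruct (Nat.ltb_spec (n+i) (n+n)); [reflexivity|lia]).
  rewrite E1, E2. split; intros H H'; apply H; intros i Hi; specialize (H' i Hi); unfold env in *;
  destruct (Nat.ltb_spec i (n+n)); destruct (Nat.ltb_spec (n+i) (n+n)); try lia; auto.
Qed.

Lemma sat_AxR Σ e He D (M : model Σ D) rho P :
  sat M rho (AxR e He P) <-> CongR e He M P.
Proof.
  unfold AxR, CongR. rewrite sat_alls. apply forall_iff; intros s.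
  cbn [sat]. rewrite sat_eqf. rewrite !map_vars.
  set (n := ar_rels Σ P).
  set (env := fun i => if i <? n + n then s i else rho (i - (n + n))).
  assert (E1 : tab 0 n env = tab 0 n s) by (apply tab_ext2; intros i Hi; unfold env; simpl;
     destruct (Nat.ltb_spec i (n+n)); [reflexivity|lia]).
  assert (E2 : tab n n env = tab n n s) by (apply tab_ext2; intros i Hi; unfold env; simpl;
     destruct (Nat.ltb_spec (n+i) (n+n)); [reflexivity|lia]).
  rewrite E1, E2. split; intros H H'; apply H; intros i Hi; specialize (H' i Hi); unfold env in *;
  destruct (Nat.ltb_spec i (n+n)); destruct (Nat.ltb_spec (n+i) (n+n)); try lia; auto.
Qed.

Lemma find_ext {A : Type} (f g : A -> bool) l : (forall a, f a = g a) -> List.find f l = List.find g l.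
Proof. intros H; induction l; simpl; [reflexivity|]. rewrite H, IHl. reflexivity. Qed.

Lemma tab_split {D : Type} n (a b : nat -> D) :
  tab 0 n a = tab 0 n (fun i => if i <? n then a i else b (i - n)) /\
  tab 0 n b = tab n n (fun i => if i <? n then a i else b (i - n)).
Proof.
  split; apply tab_ext2; intros i Hi; simpl.
  - destruct (Nat.ltb_spec i n); [reflexivity|lia].
  - destruct (Nat.ltb_spec (n+i) n); [lia|]. f_equal. lia.
Qed.

Lemma congF_use Σ e He D (M : model Σ D) f (a b : nat -> D) : CongF e He M f ->
  (forall i, i < ar_syms Σ f -> Rel e He M (a i) (b i)) ->
  Rel e He M (fun_i M f (tab 0 _ a)) (fun_i M f (tab 0 _ b)).
Proof.
  intros H Hab. destruct (tab_split (ar_syms Σ f) a b) as [E1 E2]. rewrite E1, E2.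
  apply H. intros i Hi. destruct (Nat.ltb_spec i (ar_syms Σ f)); [|lia].
  destruct (Nat.ltb_spec (ar_syms Σ f + i) (ar_syms Σ f)); [lia|].
  replace (ar_syms Σ f + i - ar_syms Σ f) with i by lia. auto.
Qed.

Lemma congR_use Σ e He D (M : model Σ D) P (a b : nat -> D) : CongR e He M P ->
  (forall i, i < ar_rels Σ P -> Rel e He M (a i) (b i)) ->
  rel_i M P (tab 0 _ a) -> rel_i M P (tab 0 _ b).
Proof.
  intros H Hab. destruct (tab_split (ar_rels Σ P) a b) as [E1 E2]. rewrite E1, E2.
  apply H. intros i Hi. destruct (Nat.ltb_spec i (ar_rels Σ P)); [|lia].
  destruct (Nat.ltb_spec (ar_rels Σ P + i) (ar_rels Σ P)); [lia|].
  replace (ar_rels Σ P + i - ar_rels Σ P) with i by lia. auto.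
Qed.

Section Quot.
Variables (Σ : signature) (e : rels Σ) (He : ar_rels Σ e = 2) (D : Type) (M : model Σ D)
  (dec : model_dec M) (l : list D) (Hl : forall x, List.In x l).
Notation R := (Rel e He M).
Hypotheses (Rrefl : forall x, R x x) (Rsym : forall x y, R x y -> R y x)
  (Rtrans : forall x y z, R x y -> R y z -> R x z).
Variables (Fs : list (syms Σ)) (Ps : list (rels Σ))
  (HF : forall f, List.In f Fs -> CongF e He M f) (HP : forall P, List.In P Ps -> CongR e He M P).

Definition pb (x : D) : D -> bool := fun y => if dec e (pair_vec Σ e He y x) then true else false.
Definition rep (x : D) : D := match List.find (pb x) l with Some y => y | None => x end.

Lemma rep_R x : R (rep x) x.
Proof.
  unfold rep. destruct (List.find (pb x) l) eqn:E.
  - apply List.find_some in E as [_ E]. unfold pb in E. destruct dec; [assumption|discriminate].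
  - apply Rrefl.
Qed.

Lemma rep_eq x x' : R x x' -> rep x = rep x'.
Proof.
  intros Hx. unfold rep. rewrite (find_ext (pb x) (pb x')).
  - destruct (List.find (pb x') l) eqn:E; [reflexivity|].
    exfalso. apply List.find_none with (x := x') in E; [|apply Hl].
    unfold pb in E. destruct dec; [discriminate|]. apply n, Rrefl.
  - intros y. unfold pb. destruct dec as [H1|H1]; destruct dec as [H2|H2]; try reflexivity; exfalso.
    + apply H2. exact (Rtrans _ _ _ H1 Hx).
    + apply H1. exact (Rtrans _ _ _ H2 (Rsym _ _ Hx)).
Qed.

Lemma rep_idem x : rep (rep x) = rep x.
Proof. apply rep_eq, rep_R. Qed.

Definition D' := {x : D | rep x = x}.
Definition mk (x : D) : D' := exist _ (rep x) (rep_idem x).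

Lemma sig_eq (a b : D') : proj1_sig a = proj1_sig b -> a = b.
Proof.
  destruct a as [x p], b as [y q]; simpl; intros H; subst y. f_equal. apply proof_irrelevance.
Qed.

Definition M' : model Σ D' :=
  Model Σ (fun f v => mk (fun_i M f (Vector.map (@proj1_sig _ _) v)))
          (fun P v => rel_i M P (Vector.map (@proj1_sig _ _) v)).

Lemma eval_q : forall t, incl (symt t) Fs -> forall rho' rho, (forall i, R (proj1_sig (rho' i)) (rho i)) ->
  R (proj1_sig (eval M' rho' t)) (eval M rho t).
Proof.
  refine (@tind Σ (fun t => incl (symt t) Fs -> forall rho' rho, (forall i, R (proj1_sig (rho' i)) (rho i)) ->
  R (proj1_sig (eval M' rho' t)) (eval M rho t)) _ _).
  - intros n Hn rho' rho H. simpl. apply H.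
  - intros f v IH Hs rho' rho H. rewrite symt_func in Hs.
    cbn [eval]. unfold M' at 1. cbn [fun_i]. unfold mk at 1. cbn [proj1_sig].
    eapply Rtrans; [apply rep_R|].
    rewrite Vector.map_map, !map_tab0. apply congF_use.
    + apply HF, Hs. left; reflexivity.
    + intros i _. apply IH; [|exact H]. intros x Hx. apply Hs. right. apply (symv_nth v i), Hx.
Qed.

Lemma sat_q : forall phi, incl (symf phi) Fs -> incl (relf phi) Ps -> forall rho' rho,
  (forall i, R (proj1_sig (rho' i)) (rho i)) -> (sat M' rho' phi <-> sat M rho phi).
Proof.
  induction phi; intros HFs HPs rho' rho H; simpl in HFs, HPs |- *.
  - reflexivity.
  - rewrite Vector.map_map, !map_tab0. assert (HC : CongR e He M P) by (apply HP, HPs; left; reflexivity).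
    assert (Ht : forall i, R (proj1_sig (eval M' rho' (vnth t i))) (eval M rho (vnth t i))).
    { intros i. apply eval_q; [|exact H]. intros x Hx. apply HFs, (symv_nth t i), Hx. }
    split; intros Hr; (eapply congR_use; [exact HC| |exact Hr]); intros i _; [apply Ht| apply Rsym, Ht].
  - apply incl_app_inv in HFs as [F1 F2]; apply incl_app_inv in HPs as [P1 P2].
    rewrite (IHphi1 F1 P1 rho' rho H), (IHphi2 F2 P2 rho' rho H). reflexivity.
  - apply incl_app_inv in HFs as [F1 F2]; apply incl_app_inv in HPs as [P1 P2].
    rewrite (IHphi1 F1 P1 rho' rho H), (IHphi2 F2 P2 rho' rho H). reflexivity.
  - apply incl_app_inv in HFs as [F1 F2]; apply incl_app_inv in HPs as [P1 P2].
    rewrite (IHphi1 F1 P1 rho' rho H), (IHphi2 F2 P2 rho' rho H). reflexivity.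
  - split; intros H1 d.
    + apply (IHphi HFs HPs (scons (mk d) rho')); [|apply H1].
      intros [|i]; simpl; [apply rep_R|apply H].
    + apply (IHphi HFs HPs (scons d rho') (scons (proj1_sig d) rho)); [|apply H1].
      intros [|i]; simpl; [apply Rrefl|apply H].
  - split; intros [d H1].
    + exists (proj1_sig d). apply (IHphi HFs HPs (scons d rho') (scons (proj1_sig d) rho)); [|apply H1].
      intros [|i]; simpl; [apply Rrefl|apply H].
    + exists (mk d). refine (proj2 (IHphi HFs HPs (scons (mk d) rho') (scons d rho) _) H1).
      intros [|i]; simpl; [apply rep_R|apply H].
Qed.

Lemma bwd_core rho phi : sat M rho phi -> incl (symf phi) Fs -> incl (relf phi) Ps -> FSATEQ e He phi.
Proof.
  intros Hs HFs HPs. exists D', M', (fun i => mk (rho i)). split; [|split; [|split]].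
  - exists (List.map mk l). intros z. apply List.in_map_iff. exists (proj1_sig z). split; [|apply Hl].
    apply sig_eq. simpl. apply (proj2_sig z).
  - constructor. intros P v. apply dec.
  - intros x y. simpl. rewrite map_pair_vec. fold (R (proj1_sig x) (proj1_sig y)). split.
    + intros Hxy. apply sig_eq. rewrite <- (proj2_sig x), <- (proj2_sig y). apply rep_eq, Hxy.
    + intros <-. apply Rrefl.
  - refine (proj2 (sat_q phi HFs HPs (fun i => mk (rho i)) rho _) Hs). intros i. apply rep_R.
Qed.
End Quot.

Theorem theorem21 (Σ : signature) (e : rels Σ) (He : ar_rels Σ e = 2) :
  reduces (@FSATEQ Σ e He) (@FSAT Σ).
Proof.
  exists (red e He). intros phi. split.
  - intros (D & M & rho & Hfin & Hdec & Heq & Hs).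
    exists D, M, rho. split; [exact Hfin|]. split; [exact Hdec|].
    assert (HR : forall x y, Rel e He M x y <-> x = y) by exact Heq.
    unfold red. cbn [sat]. split; [exact Hs|]. split; [|split; [|split; [|split]]].
    + unfold Ax_refl. cbn [sat]. intros d. apply sat_Req, HR. reflexivity.
    + unfold Ax_sym. cbn [sat]. intros d1 d2 H. apply sat_Req in H. apply sat_Req.
      apply HR in H. apply HR. simpl in *. congruence.
    + unfold Ax_trans. cbn [sat]. intros d1 d2 d3 H1 H2. apply sat_Req in H1. apply sat_Req in H2. apply sat_Req.
      apply HR in H1. apply HR in H2. apply HR. simpl in *. congruence.
    + apply sat_bigconj. intros a Ha. apply List.in_map_iff in Ha as [f [<- _]].
      apply sat_AxF. intros s H. apply HR. f_equal. apply tab_ext2. intros i Hi. apply HR, H, Hi.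
    + apply sat_bigconj. intros a Ha. apply List.in_map_iff in Ha as [P [<- _]].
      apply sat_AxR. intros s H. replace (tab (ar_rels Σ P) _ s) with (tab 0 (ar_rels Σ P) s); [exact (fun x => x)|].
      apply tab_ext2. intros i Hi. apply HR, H, Hi.
  - intros (D & M & rho & [l Hl] & [dec] & Hs).
    unfold red in Hs. cbn [sat] in Hs. destruct Hs as (Hs & Hr & Hsy & Htr & HF & HP).
    assert (Rrefl : forall x, Rel e He M x x).
    { intros x. unfold Ax_refl in Hr. cbn [sat] in Hr. specialize (Hr x). apply sat_Req in Hr. exact Hr. }
    assert (Rsym : forall x y, Rel e He M x y -> Rel e He M y x).
    { intros x y H. unfold Ax_sym in Hsy. cbn [sat] in Hsy. specialize (Hsy x y).
      rewrite !sat_Req in Hsy. exact (Hsy H). }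
    assert (Rtrans : forall x y z, Rel e He M x y -> Rel e He M y z -> Rel e He M x z).
    { intros x y z H1 H2. unfold Ax_trans in Htr. cbn [sat] in Htr. specialize (Htr x y z).
      rewrite !sat_Req in Htr. exact (Htr H1 H2). }
    rewrite sat_bigconj in HF, HP.
    apply (@bwd_core Σ e He D M dec l Hl Rrefl Rsym Rtrans (symf phi) (relf phi)) with (rho := rho).
    + intros f Hf. apply (sat_AxF e He M rho). apply HF. apply List.in_map, Hf.
    + intros P HP'. apply (sat_AxR e He M rho). apply HP. apply List.in_map, HP'.
    + exact Hs.
    + apply List.incl_refl.
    + apply List.incl_refl.
Qed.
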